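(* There exists a constant $c>0$, independent of $n$, such that for all sufficiently large $n$, \[ \zeta_n> -c+\frac{\min\{1-\beta,\alpha\}}{\lambda_1}\log n . \]
   Context: Fix constants $r_0,d_0\ge 0$ with $\lambda_0:=r_0-d_0<0$, $d_1>0$, $k>1$, $\alpha\in(0,1)$, $\beta\in(0,1)$. Let $f:[0,\infty)^2\to[0,\infty)$ satisfy: (A1) $f$ is Lipschitz continuous; (A2) $f(x,y)=r_1$ when $x+y=0$ and $f(x,y)=d_1$ when $x+y=1$, where $r_1:=f(0,0)>d_1$; (A3) $f(x,y)=\Phi(x+y)$ for some non-increasing function $\Phi:[0,\infty)\to[0,\infty)$; (A4) $f(x,y)\to0$ as $x\to\infty$ and as $y\to\infty$; (A5) $f(x,y)\ge \lambda_1(1-(x+y))+d_1$ for all $x,y\ge0$, where $\lambda_1:=r_1-d_1>0$. Put $\phi(x,y):=f(x,y)-d_1$. For each integer $n\ge1$ let $K=K(n):=kn$ and let $(y_0,y_1,y_\beta)$ solve \[ \dot y_0=\lambda_0 y_0,\qquad \dot y_1=\phi(y_0,y_1)\,y_1+n^{-\alpha}y_0,\qquad \dot y_\beta=\phi(y_0,y_1)\,y_\beta, \] with $(y_0(0),y_1(0),y_\beta(0))=(n/K,\,n^\beta/K,\,n^\beta/K)$. Define the deterministic recurrence time $\zeta_n:=\inf\{t>0: y_1(t)=n/K\}$. *)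

(* Defs.v *)
From Stdlib Require Import Reals.
From Coquelicot Require Import Coquelicot.
Open Scope R_scope.

Definition phi_of (f : R -> R -> R) (d1 : R) (x y : R) : R := f x y - d1.

Definition is_solution (f : R -> R -> R) (lambda0 d1 k alpha beta : R) (n : nat)
    (y0 y1 yb : R -> R) : Prop :=
  let nR := INR n in
  let K := k * nR in
  y0 0 = nR / K /\ y1 0 = Rpower nR beta / K /\ yb 0 = Rpower nR beta / K /\
  filterlim y0 (at_right 0) (locally (y0 0)) /\
  filterlim y1 (at_right 0) (locally (y1 0)) /\
  filterlim yb (at_right 0) (locally (yb 0)) /\
  (forall t, 0 < t ->
     is_derive y0 t (lambda0 * y0 t) /\
     is_derive y1 t (phi_of f d1 (y0 t) (y1 t) * y1 t + Rpower nR (- alpha) * y0 t) /\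
     is_derive yb t (phi_of f d1 (y0 t) (y1 t) * yb t)).

(* zeta_n := inf { t > 0 : y1(t) = n/K }, as an extended real (+oo if the set is empty). *)
Definition zeta (k : R) (n : nat) (y1 : R -> R) : Rbar :=
  Glb_Rbar (fun t => 0 < t /\ y1 t = INR n / (k * INR n)).

(* Main.v *)
Require Import Defs.
From Stdlib Require Import Reals Lra.
From Coquelicot Require Import Coquelicot.
Open Scope R_scope.
Lemma der_cont (g : R -> R) x d : is_derive g x d -> continuity_pt g x.
Proof. intro H. apply derivable_continuous_pt. exists d. apply is_derive_Reals. exact H. Qed.

Lemma rc_filt (g : R -> R) s : filterlim g (at_right s) (locally (g s)) ->
  forall eps, 0 < eps -> exists d, 0 < d /\ forall u, s <= u < s + d -> Rabs (g u - g s) < eps.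
Proof.
  intros H eps He.
  destruct (H (ball (g s) (mkposreal eps He)) (locally_ball _ _)) as [d Hd].
  exists d. split. apply cond_pos. intros u Hu.
  destruct (Req_dec u s) as [->|Hne].
  - rewrite Rminus_eq_0, Rabs_R0. exact He.
  - assert (B : ball s d u).
    { unfold ball; simpl; unfold AbsRing_ball, abs, minus, plus, opp; simpl.
      rewrite Rabs_pos_eq; lra. }
    specialize (Hd u B ltac:(lra)). exact Hd.
Qed.

Lemma c_eps (g : R -> R) s d0 : is_derive g s d0 ->
  forall eps, 0 < eps -> exists d, 0 < d /\ forall u, Rabs (u - s) < d -> Rabs (g u - g s) < eps.
Proof.
  intros H eps He. pose proof (der_cont _ _ _ H) as C.
  destruct (C eps He) as [a [Ha Hx]].
  exists a; split; auto. intros u Hu.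
  destruct (Req_dec u s) as [->|Hne].
  - rewrite Rminus_eq_0, Rabs_R0. exact He.
  - apply (Hx u). split. split. exact I. auto. exact Hu.
Qed.
Lemma mvt_cl (g dg : R -> R) a b : a <= b ->
  (forall x, a <= x <= b -> is_derive g x (dg x)) ->
  exists c, a <= c <= b /\ g b - g a = dg c * (b - a).
Proof.
  intros Hab Hd.
  destruct (MVT_gen g a b dg) as [c [Hc E]].
  - intros x Hx. rewrite Rmin_left in Hx by lra. rewrite Rmax_right in Hx by lra. apply Hd; lra.
  - intros x Hx. rewrite Rmin_left in Hx by lra. rewrite Rmax_right in Hx by lra. eapply der_cont; apply Hd; lra.
  - exists c. rewrite Rmin_left in Hc by lra. rewrite Rmax_right in Hc by lra. split; auto.
Qed.

Lemma decr (g dg : R -> R) a b : a <= b ->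
  (forall x, a <= x <= b -> is_derive g x (dg x)) ->
  (forall x, a <= x <= b -> dg x <= 0) -> g b <= g a.
Proof.
  intros Hab Hd Hn. destruct (mvt_cl g dg a b Hab Hd) as [c [Hc E]].
  specialize (Hn c Hc). nra.
Qed.

Lemma cst (g dg : R -> R) a b : a <= b ->
  (forall x, a <= x <= b -> is_derive g x (dg x)) ->
  (forall x, a <= x <= b -> dg x = 0) -> g b = g a.
Proof.
  intros Hab Hd Hn. destruct (mvt_cl g dg a b Hab Hd) as [c [Hc E]].
  rewrite (Hn c Hc) in E. lra.
Qed.

Lemma der_expmul (g : R -> R) x dg c0 l : is_derive g x dg ->
  is_derive (fun u => exp (l*u) * (g u + c0)) x (exp (l*x) * (l*(g x + c0) + dg)).
Proof.
  intro H.
  assert (He : is_derive (fun u => exp (l*u)) x (l * exp (l*x))).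
  { apply (is_derive_comp exp (fun u => l*u) x (exp (l*x)) l).
    apply is_derive_exp.
    pose proof (is_derive_scal (fun u => u) x l 1 (is_derive_id x)) as Hs.
    rewrite Rmult_1_r in Hs. exact Hs. }
  assert (Hg : is_derive (fun u => g u + c0) x dg).
  { pose proof (is_derive_plus g (fun _ => c0) x dg 0 H (is_derive_const c0 x)) as Hp.
    unfold plus in Hp; simpl in Hp. rewrite Rplus_0_r in Hp. exact Hp. }
  pose proof (is_derive_mult _ _ _ _ _ He Hg ltac:(intros; apply Rmult_comm)) as HM.
  unfold mult, plus in HM; simpl in HM.
  replace (exp (l * x) * (l * (g x + c0) + dg)) with (l * exp (l * x) * (g x + c0) + exp (l * x) * dg) by ring.
  exact HM.
Qed.

Lemma exp_le1 x : x <= 0 -> exp x <= 1.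
Proof. intro H. rewrite <- exp_0. destruct (Req_dec x 0) as [->|Hn]; [lra|]. apply Rlt_le, exp_increasing; lra. Qed.

Lemma y0_bounds (Y0 : R -> R) lam0 kk : lam0 < 0 -> 0 < kk -> Y0 0 = kk ->
  filterlim Y0 (at_right 0) (locally (Y0 0)) ->
  (forall t, 0 < t -> is_derive Y0 t (lam0 * Y0 t)) ->
  forall u, 0 < u -> 0 <= Y0 u <= kk.
Proof.
  intros Hl Hk H0 Hrc Hd u Hu.
  assert (key : forall s, 0 < s < u -> Y0 u = Y0 s * exp (lam0 * (u - s))).
  { intros s Hs.
    assert (E : (fun v => exp (-lam0 * v) * (Y0 v + 0)) u = (fun v => exp (-lam0 * v) * (Y0 v + 0)) s).
    { apply (cst (fun v => exp (-lam0 * v) * (Y0 v + 0)) (fun v => exp (-lam0 * v) * (-lam0 * (Y0 v + 0) + lam0 * Y0 v)) s u); [lra| |].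
      - intros x Hx. apply der_expmul. apply Hd. lra.
      - intros x Hx. ring. }
    simpl in E.
    replace (Y0 u) with (exp (lam0 * u) * (exp (-lam0 * u) * (Y0 u + 0))).
    2:{ rewrite <- Rmult_assoc, <- exp_plus. replace (lam0 * u + - lam0 * u) with 0 by ring. rewrite exp_0. ring. }
    rewrite E. replace (lam0 * (u - s)) with (lam0 * u + - lam0 * s) by ring. rewrite exp_plus. ring. }
  assert (near : forall eps, 0 < eps -> exists s, 0 < s < u /\ kk / 2 < Y0 s < kk + eps).
  { intros eps He.
    destruct (rc_filt Y0 0 Hrc (Rmin eps (kk/2)) ltac:(apply Rmin_glb_lt; lra)) as [d [Hd0 Hd']].
    exists (Rmin (d/2) (u/2)).
    assert (0 < Rmin (d/2) (u/2)) by (apply Rmin_glb_lt; lra).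
    pose proof (Rmin_l (d/2) (u/2)). pose proof (Rmin_r (d/2) (u/2)).
    pose proof (Rmin_l eps (kk/2)). pose proof (Rmin_r eps (kk/2)).
    specialize (Hd' (Rmin (d/2) (u/2)) ltac:(lra)).
    apply Rabs_def2 in Hd'. rewrite H0 in Hd'. lra. }
  assert (Hexp : forall s, 0 < s < u -> 0 < exp (lam0 * (u - s)) <= 1).
  { intros s Hs. split. apply exp_pos. apply exp_le1. nra. }
  split.
  - destruct (near 1 Rlt_0_1) as [s [Hs Hs']]. rewrite (key s Hs).
    pose proof (Hexp s Hs). nra.
  - apply Rle_plus_epsilon. intros eps He.
    destruct (near eps He) as [s [Hs Hs']]. rewrite (key s Hs).
    pose proof (Hexp s Hs). nra.
Qed.

Lemma main_bound (Y Y0 : R -> R) (ph : R -> R -> R) lam1 b kk t :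
  0 < lam1 -> 0 < b -> 0 < kk -> 0 < Y 0 ->
  filterlim Y (at_right 0) (locally (Y 0)) ->
  (forall u, 0 < u -> is_derive Y u (ph (Y0 u) (Y u) * Y u + b * Y0 u)) ->
  (forall u, 0 < u -> 0 <= Y0 u <= kk) ->
  (forall u, 0 < u -> 0 <= Y u -> ph (Y0 u) (Y u) <= lam1) ->
  0 < t -> Y t = kk ->
  exp (-lam1 * t) * (kk + b * kk / lam1) <= Y 0 + b * kk / lam1.
Proof.
  intros Hl Hb Hk HY0 Hrc HY HB Hph Ht HYt.
  set (a := b * kk / lam1).
  assert (Ha : 0 < a) by (unfold a; apply Rdiv_lt_0_compat; nra).
  assert (Hla : lam1 * a = b * kk) by (unfold a; field; lra).
  pose proof (exp_pos (-lam1 * t)) as Ept.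
  pose proof (exp_le1 (-lam1 * t) ltac:(nra)) as Et1.
  destruct (Rle_lt_dec kk (Y 0)) as [Hc|Hc].
  { nra. }
  set (S := fun s => 0 <= s <= t /\ Y s <= Y 0).
  destruct (completeness S) as [ss [Hub Hlub]].
  { exists t. intros x [Hx _]. lra. }
  { exists 0. split; lra. }
  assert (Hs0 : 0 <= ss) by (apply Hub; split; lra).
  assert (Hst : ss <= t) by (apply Hlub; intros x [Hx _]; lra).
  assert (ClA : Y ss <= Y 0).
  { destruct (Req_dec ss 0) as [->|Hne]; [lra|].
    apply Rnot_lt_le; intro Hcc.
    destruct (c_eps Y ss _ (HY ss ltac:(lra)) (Y ss - Y 0) ltac:(lra)) as [d [Hd Hd']].
    assert (ss <= ss - d/2); [|lra].
    apply Hlub. intros x [Hx1 Hx2].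
    destruct (Rle_lt_dec x (ss - d/2)) as [|Hlt]; auto. exfalso.
    assert (x <= ss) by (apply Hub; split; auto).
    assert (Rabs (x - ss) < d) by (apply Rabs_def1; lra).
    specialize (Hd' x H0). apply Rabs_def2 in Hd'. lra. }
  assert (Hst' : ss < t).
  { destruct (Req_dec ss t) as [->|]; [lra|lra]. }
  assert (ClB : forall u, ss < u <= t -> Y 0 < Y u).
  { intros u Hu. apply Rnot_le_lt; intro Hcc.
    assert (u <= ss) by (apply Hub; split; [lra|auto]). lra. }
  assert (ClC : forall s', ss < s' <= t ->
            exp (-lam1 * t) * (Y t + a) <= exp (-lam1 * s') * (Y s' + a)).
  { intros s' Hs'.
    apply (decr (fun v => exp (-lam1 * v) * (Y v + a))
             (fun v => exp (-lam1 * v) * (-lam1 * (Y v + a) + (ph (Y0 v) (Y v) * Y v + b * Y0 v))) s' t).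
    - lra.
    - intros x Hx. apply der_expmul. apply HY. lra.
    - intros x Hx. pose proof (exp_pos (-lam1 * x)).
      pose proof (ClB x ltac:(lra)). pose proof (HB x ltac:(lra)).
      pose proof (Hph x ltac:(lra) ltac:(lra)).
      assert (ph (Y0 x) (Y x) * Y x <= lam1 * Y x) by nra.
      assert (b * Y0 x <= b * kk) by nra.
      assert (-lam1 * (Y x + a) + (ph (Y0 x) (Y x) * Y x + b * Y0 x) <= 0) by nra.
      nra. }
  assert (RC : forall eps, 0 < eps -> exists d, 0 < d /\ forall u, ss <= u < ss + d -> Rabs (Y u - Y ss) < eps).
  { intros eps He. destruct (Req_dec ss 0) as [->|Hne].
    - exact (rc_filt Y 0 Hrc eps He).
    - destruct (c_eps Y ss _ (HY ss ltac:(lra)) eps He) as [d [Hd Hd']].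
      exists d. split; auto. intros u Hu. apply Hd'. apply Rabs_def1; lra. }
  apply Rle_plus_epsilon. intros eps He.
  destruct (RC eps He) as [d [Hd Hd']].
  set (s' := ss + Rmin d (t - ss) / 2).
  pose proof (Rmin_l d (t - ss)). pose proof (Rmin_r d (t - ss)).
  assert (0 < Rmin d (t - ss)) by (apply Rmin_glb_lt; lra).
  assert (Hs'1 : ss < s' <= t) by (unfold s'; lra).
  specialize (Hd' s' ltac:(unfold s'; lra)). apply Rabs_def2 in Hd'.
  pose proof (ClC s' Hs'1) as HC. pose proof (ClB s' Hs'1).
  pose proof (exp_pos (-lam1 * s')). pose proof (exp_le1 (-lam1 * s') ltac:(nra)).
  rewrite HYt in HC. nra.
Qed.

Lemma exp_mono x y : x <= y -> exp x <= exp y.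
Proof. intro H. destruct (Req_dec x y) as [->|]; [lra|]. apply Rlt_le, exp_increasing; lra. Qed.

Lemma exp_le_inv x y : exp x <= exp y -> x <= y.
Proof. intro H. apply Rnot_lt_le; intro Hc. pose proof (exp_increasing _ _ Hc). lra. Qed.

Theorem lemmaA2
  (r0 d0 d1 k alpha beta : R) (f : R -> R -> R)
  (Hr0 : 0 <= r0) (Hd0 : 0 <= d0) (Hlam0 : r0 - d0 < 0)
  (Hd1 : 0 < d1) (Hk : 1 < k)
  (Ha0 : 0 < alpha) (Ha1 : alpha < 1) (Hb0 : 0 < beta) (Hb1 : beta < 1)
  (* f : [0,oo)^2 -> [0,oo) *)
  (Hfnn : forall x y, 0 <= x -> 0 <= y -> 0 <= f x y)
  (* (A1) Lipschitz *)
  (HA1 : exists L, forall x y x' y', 0 <= x -> 0 <= y -> 0 <= x' -> 0 <= y' ->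
           Rabs (f x y - f x' y') <= L * (Rabs (x - x') + Rabs (y - y')))
  (* (A2) f = r1 := f(0,0) on x+y=0, f = d1 on x+y=1, r1 > d1 *)
  (HA2a : forall x y, 0 <= x -> 0 <= y -> x + y = 0 -> f x y = f 0 0)
  (HA2b : forall x y, 0 <= x -> 0 <= y -> x + y = 1 -> f x y = d1)
  (HA2c : f 0 0 > d1)
  (* (A3) f(x,y) = Phi(x+y), Phi : [0,oo) -> [0,oo) non-increasing *)
  (HA3 : exists Phi : R -> R,
           (forall s, 0 <= s -> 0 <= Phi s) /\
           (forall s t, 0 <= s -> s <= t -> Phi t <= Phi s) /\
           (forall x y, 0 <= x -> 0 <= y -> f x y = Phi (x + y)))
  (* (A4) f(x,y) -> 0 as x -> oo and as y -> oo *)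
  (HA4x : forall y, 0 <= y -> is_lim (fun x => f x y) p_infty 0)
  (HA4y : forall x, 0 <= x -> is_lim (fun y => f x y) p_infty 0)
  (* (A5) f(x,y) >= lambda1 (1 - (x+y)) + d1, lambda1 := r1 - d1 *)
  (HA5 : forall x y, 0 <= x -> 0 <= y -> f x y >= (f 0 0 - d1) * (1 - (x + y)) + d1)
  (* the solutions, for each n >= 1 *)
  (y0 y1 yb : nat -> R -> R)
  (Hsol : forall n : nat, (1 <= n)%nat ->
            is_solution f (r0 - d0) d1 k alpha beta n (y0 n) (y1 n) (yb n)) :
  exists c : R, 0 < c /\
    exists N : nat, forall n : nat, (N <= n)%nat ->
      Rbar_lt (Finite (- c + Rmin (1 - beta) alpha / (f 0 0 - d1) * ln (INR n)))
              (zeta k n (y1 n)).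
Proof.
  destruct HA3 as [Phi [HPn [HPm HPf]]].
  set (lam1 := f 0 0 - d1).
  assert (Hl1 : 0 < lam1) by (unfold lam1; lra).
  set (m := Rmin (1 - beta) alpha).
  set (C := 1 + 1 / lam1).
  assert (HC : 1 < C) by (unfold C; assert (0 < 1/lam1) by (apply Rdiv_lt_0_compat; lra); lra).
  assert (HlnC : 0 < ln C) by (rewrite <- ln_1; apply ln_increasing; lra).
  exists (ln C / lam1 + 1). split.
  { assert (0 < ln C / lam1) by (apply Rdiv_lt_0_compat; lra). lra. }
  exists 1%nat. intros n Hn.
  assert (HnR : 1 <= INR n) by (apply (le_INR 1 n) in Hn; simpl in Hn; exact Hn).
  set (nR := INR n) in *.
  pose proof (Hsol n Hn) as Hs. unfold is_solution in Hs. cbv zeta in Hs. fold nR in Hs.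
  destruct Hs as [H0 [H1 [_ [Hc0 [Hc1 [_ Hd]]]]]].
  assert (Hkk : 0 < 1 / k) by (apply Rdiv_lt_0_compat; lra).
  assert (E1 : nR / (k * nR) = 1 / k) by (field; lra).
  rewrite E1 in H0.
  assert (HB : forall u, 0 < u -> 0 <= y0 n u <= 1 / k).
  { apply (y0_bounds (y0 n) (r0 - d0) (1 / k)); auto.
    intros t Ht. apply (Hd t Ht). }
  set (L := ln nR).
  assert (HL : 0 <= L).
  { unfold L. destruct (Req_dec nR 1) as [->|]. rewrite ln_1; lra.
    left. rewrite <- ln_1. apply ln_increasing; lra. }
  set (X := - (ln C / lam1 + 1) + m / lam1 * L).
  assert (Key : forall t, 0 < t /\ y1 n t = INR n / (k * INR n) -> X + 1 <= t).
  { intros t [Ht Hyt]. fold nR in Hyt. rewrite E1 in Hyt.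
    set (b := Rpower nR (- alpha)).
    assert (Hb : 0 < b) by (unfold b, Rpower; apply exp_pos).
    assert (HY0 : 0 < y1 n 0).
    { rewrite H1. apply Rdiv_lt_0_compat. unfold Rpower; apply exp_pos. nra. }
    pose proof (main_bound (y1 n) (y0 n) (phi_of f d1) lam1 b (1 / k) t Hl1 Hb Hkk HY0 Hc1
      ltac:(intros u Hu; apply (Hd u Hu)) HB) as MB.
    assert (Hph : forall u, 0 < u -> 0 <= y1 n u -> phi_of f d1 (y0 n u) (y1 n u) <= lam1).
    { intros u Hu Hy. unfold phi_of, lam1. pose proof (HB u Hu).
      rewrite (HPf (y0 n u) (y1 n u)) by lra. rewrite (HPf 0 0) by lra.
      rewrite Rplus_0_r. pose proof (HPm 0 (y0 n u + y1 n u) ltac:(lra) ltac:(lra)). lra. }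
    specialize (MB Hph Ht Hyt).
    assert (Hm1 : m <= 1 - beta) by apply Rmin_l.
    assert (Hm2 : m <= alpha) by apply Rmin_r.
    set (E := exp (- m * L)).
    assert (HE : 0 < E) by apply exp_pos.
    assert (Hy10 : y1 n 0 <= E / k).
    { rewrite H1. unfold Rpower. fold L.
      replace (k * nR) with (k * exp L) by (unfold L; rewrite exp_ln; lra).
      replace (exp (beta * L) / (k * exp L)) with (exp (beta * L + - L) / k).
      2:{ rewrite exp_plus, exp_Ropp. field. split. pose proof (exp_pos L); lra. lra. }
      unfold Rdiv. apply Rmult_le_compat_r. lra. unfold E. apply exp_mono. nra. }
    assert (HbE : b <= E).
    { unfold b, E, Rpower. fold L. apply exp_mono. nra. }
    assert (Hrhs : y1 n 0 + b * (1 / k) / lam1 <= E * C / k).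
    { unfold C. assert (b * (1/k) / lam1 <= E * (1/k) / lam1).
      { unfold Rdiv. apply Rmult_le_compat_r. left; apply Rinv_0_lt_compat; lra.
        apply Rmult_le_compat_r; lra. }
      replace (E * (1 + 1 / lam1) / k) with (E / k + E * (1 / k) / lam1) by (field; lra).
      lra. }
    assert (Hlhs : exp (- lam1 * t) * (1 / k) <= exp (- lam1 * t) * (1 / k + b * (1 / k) / lam1)).
    { apply Rmult_le_compat_l. left; apply exp_pos.
      assert (0 < b * (1/k) / lam1) by (apply Rdiv_lt_0_compat; nra). lra. }
    assert (Hfin : exp (- lam1 * t) <= exp (- m * L + ln C)).
    { rewrite exp_plus, exp_ln by lra. fold E.
      assert (exp (- lam1 * t) * (1 / k) <= E * C / k) by lra.
      assert (0 < k) by lra.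
      replace (E * C / k) with ((E * C) * (1/k)) in H by (field; lra).
      apply Rmult_le_reg_r with (1 / k); auto. }
    apply exp_le_inv in Hfin.
    unfold X, m.
    assert (lam1 * (X + 1) <= lam1 * t).
    { unfold X. replace (lam1 * (- (ln C / lam1 + 1) + m / lam1 * L + 1)) with (m * L - ln C) by (field; lra).
      lra. }
    fold m. fold X. apply Rmult_le_reg_l with lam1; auto. }
  unfold zeta.
  pose proof (Glb_Rbar_correct (fun t => 0 < t /\ y1 n t = INR n / (k * INR n))) as [Hlb Hgr].
  assert (G : Rbar_le (Finite (X + 1)) (Glb_Rbar (fun t => 0 < t /\ y1 n t = INR n / (k * INR n)))).
  { apply Hgr. intros x Hx. simpl. apply Key. exact Hx. }
  fold lam1 m. fold nR L.
  replace (- (ln C / lam1 + 1) + m / lam1 * L) with X by reflexivity.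
  destruct (Glb_Rbar _) as [g| |]; simpl in *; lra.
Qed.
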